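(* The following identity holds: \begin{equation*} \begin{split} &\Delta x \sum_{i=0}^{N-1}\left(\frac{\operatorname{Up}(\varrho^k \widehat u^k u^{k})_{i+3/2} -\operatorname{Up}(\varrho^k \widehat u^k u^{k})_{i-1/2}}{2\Delta x}\right)u_{i+1/2}^k \\ &\qquad = -\Delta x \sum_{i=0}^{N-1}\operatorname{Up}\left(\varrho^k u^{k}\right)_{i+1/2}\partial_{i+1/2}~\left(\frac{|\widehat u^k|^2}{2}\right) + \mathcal{N}_2 \\ &\qquad = -\Delta x\sum_i \partial_t^k \varrho_i\left(\frac{|\widehat u^k|^2}{2}\right)+ \mathcal{N}_2, \end{split} \end{equation*} where the numerical diffusion term $\mathcal{N}_2$ is given by \begin{equation*} \mathcal{N}_2 = \frac{(\Delta x)^2 }{2}\sum_{i=0}^{N-1}\left|\operatorname{Up}\left(\varrho^k u^{k}\right)_{i+1/2}\right|\left|\partial_{i+1/2} \widehat u^k\right|^2. \end{equation*}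
   Context: Finite difference scheme for 1D viscous isentropic compressible Navier–Stokes on $(0,L)$. The interval $[0,L]$ is split into $N$ cells of length $\Delta x=L/N$ with nodes $x_{i-1/2}=i\Delta x$, $i=0,\dots,N$; time levels $t^k=k\Delta t$. Velocities $u^k_{i-1/2}$ live on the nodes with $u^k_{-1/2}=u^k_{N-1/2}=0$, and densities $\varrho^k_i>0$ live on the cells $i=0,\dots,N-1$. Notation: $u^+=\max\{u,0\}$, $u^-=\min\{u,0\}$; $\widehat u_i=\frac{u_{i-1/2}+u_{i+1/2}}{2}$; upwind fluxes $\operatorname{Up}(\varrho u)_{i+1/2}=\varrho_i u^+_{i+1/2}+\varrho_{i+1}u^-_{i+1/2}$ and $\operatorname{Up}(\varrho\widehat u u)_{i+1/2}=(\varrho_i\widehat u_i)u^+_{i+1/2}+(\varrho_{i+1}\widehat u_{i+1})u^-_{i+1/2}$; discrete derivatives $\partial_{i+1/2}f=\frac{f_{i+1}-f_i}{\Delta x}$, $\partial_i v=\frac{v_{i+1/2}-v_{i-1/2}}{\Delta x}$, $\partial_t^k f_i=\frac{f_i^k-f_i^{k-1}}{\Delta t}$. The densities and velocities satisfy the upwind continuity scheme $\partial_t^k\varrho_i+\partial_i\operatorname{Up}(\varrho^k u^k)=0$ (used for the second equality). *)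

(* Defs.v *)
From HB Require Import structures.
From mathcomp Require Import all_boot all_order all_algebra.
Set Implicit Arguments. Unset Strict Implicit. Unset Printing Implicit Defensive.
Import Order.TTheory GRing.Theory Num.Theory.
Local Open Scope ring_scope.

(* Indexing conventions (integer indices):
   - cell quantities f : int -> R, f i = f_i (cell i, meaningful for 0 <= i < N);
   - node quantities v : int -> R, v j = v_{j-1/2} (node x_{j-1/2} = j*dx,
     meaningful for 0 <= j <= N).  So u_{i+1/2} = v (i+1), u_{i-1/2} = v i. *)

Section Defs.
Variable R : realFieldType.

Definition posp (x : R) : R := Num.max x 0.
Definition negp (x : R) : R := Num.min x 0.

Definition uhat (u : int -> R) (i : int) : R := (u i + u (i + 1)) / 2.

(* Up(rho u) = Up rho u ;  Up(rho \hat u u) = Up (fun i => rho i * uhat u i) u. *)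
Definition Up (a u : int -> R) (j : int) : R :=
  a (j - 1) * posp (u j) + a j * negp (u j).

(* With the indexing above this is both
   \partial_{i+1/2} f for a cell quantity f and \partial_i v for a node
   quantity v (since v_{i+1/2} - v_{i-1/2} = v (i+1) - v i). *)
Definition fdiff (f : int -> R) (dx : R) (i : int) : R := (f (i + 1) - f i) / dx.

End Defs.

(* Main.v *)
Require Import Defs.
From HB Require Import structures.
From mathcomp Require Import all_boot all_order all_algebra.
From mathcomp Require Import ring lra.
Import Order.TTheory GRing.Theory Num.Theory.
Local Open Scope ring_scope.

Lemma sqn (R : realFieldType) (x : R) : `|x| ^+ 2 = x ^+ 2.
Proof. by rewrite real_normK // num_real. Qed.

Lemma intS' (i : nat) : (i.+1)%:Z = i%:Z + 1.
Proof. by rewrite -addn1 PoszD. Qed.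

Theorem lemma3p2 (R : realFieldType) (L dt : R) (N k : nat)
  (rho u : nat -> int -> R)
  (hL : 0 < L) (hN : (0 < N)%N) (hdt : 0 < dt) (hk : (0 < k)%N)
  (hbc : forall m : nat, u m 0 = 0 /\ u m (N%:Z) = 0)
  (hpos : forall (m i : nat), (i < N)%N -> 0 < rho m (i%:Z))
  (hcont : forall (m i : nat), (0 < m)%N -> (i < N)%N ->
     (rho m (i%:Z) - rho m.-1 (i%:Z)) / dt
       + fdiff (Up (rho m) (u m)) (L / N%:R) (i%:Z) = 0) :
  let dx := L / N%:R in
  let F := Up (fun i => rho k i * uhat (u k) i) (u k) in
  let G := Up (rho k) (u k) in
  let N2 := dx ^+ 2 / 2 *
      \sum_(0 <= i < N) `|G (i%:Z + 1)| * `|fdiff (uhat (u k)) dx (i%:Z)| ^+ 2 in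
  dx * (\sum_(0 <= i < N)
          ((F (i%:Z + 2) - F (i%:Z)) / (2 * dx)) * u k (i%:Z + 1))
    = - dx * (\sum_(0 <= i < N)
          G (i%:Z + 1) * fdiff (fun j => `|uhat (u k) j| ^+ 2 / 2) dx (i%:Z)) + N2
  /\
  - dx * (\sum_(0 <= i < N)
          G (i%:Z + 1) * fdiff (fun j => `|uhat (u k) j| ^+ 2 / 2) dx (i%:Z)) + N2
    = - dx * (\sum_(0 <= i < N)
          ((rho k (i%:Z) - rho k.-1 (i%:Z)) / dt) * (`|uhat (u k) (i%:Z)| ^+ 2 / 2)) + N2.
Proof.
move=> dx F G N2.
have hNr : (0 : R) < N%:R by rewrite ltr0n.
have hdx : dx != 0 by rewrite /dx mulf_neq0 // ?invr_eq0 gt_eqF.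
have [u0 uN] := hbc k.
have p0 : posp (0 : R) = 0 by rewrite /posp maxxx.
have n0 : negp (0 : R) = 0 by rewrite /negp minxx.
split.
- pose D (i : nat) := (F (i%:Z + 1) * u k i%:Z + F i%:Z * u k (i%:Z + 1)) / 2.
  have key : forall i, (0 <= i < N)%N ->
    dx * (((F (i%:Z + 2) - F (i%:Z)) / (2 * dx)) * u k (i%:Z + 1)) =
    (- dx * (G (i%:Z + 1) * fdiff (fun j => `|uhat (u k) j| ^+ 2 / 2) dx (i%:Z))
     + dx ^+ 2 / 2 * (`|G (i%:Z + 1)| * `|fdiff (uhat (u k)) dx (i%:Z)| ^+ 2))
    + (D i.+1 - D i).
    move=> i /andP[_ hi].
    have e1 : forall x : int, x + 2 - 1 = x + 1.
      by move=> x; rewrite -addrA; congr (_ + _).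
    have e2 : forall x : int, x + 1 - 1 = x by move=> x; rewrite addrK.
    have e3 : forall x : int, x + 1 + 1 = x + 2 by move=> x; rewrite -addrA.
    rewrite /D intS' /F /G /Up /fdiff /uhat !sqn !e1 !e2 !e3.
    have r0 := hpos k i hi.
    set a := u k (i%:Z + 1).
    case: (leP 0 a) => hu.
    + rewrite /posp /negp (max_l hu) (min_r hu) mulr0 addr0.
      rewrite ger0_norm; last by rewrite mulr_ge0 // ltW.
      field; exact: hdx.
    + have hu' := ltW hu.
      rewrite /posp /negp (max_r hu') (min_l hu') mulr0 add0r.
      have r1 : 0 < rho k (i%:Z + 1).
        have hi1 : (i.+1 < N)%N.
          rewrite ltn_neqAle hi andbT; apply/eqP => e.
          by move: hu; rewrite /a -intS' e uN ltxx.
        by have := hpos k _ hi1; rewrite intS'.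
      rewrite ler0_norm; last by rewrite mulr_ge0_le0 // ltW.
      field; exact: hdx.
  rewrite mulr_sumr (eq_big_nat _ _ key) big_split /= telescope_sumr //.
  rewrite /N2 mulr_sumr -mulr_sumr.
  have -> : D N - D 0 = 0.
    rewrite /D /F /Up uN u0 p0 n0; ring.
  by rewrite addr0 big_split /= !mulr_sumr.
- congr (_ + N2).
  pose H (i : nat) := G i%:Z * (`|uhat (u k) i%:Z| ^+ 2 / 2).
  have key : forall i, (0 <= i < N)%N ->
    - dx * (G (i%:Z + 1) * fdiff (fun j => `|uhat (u k) j| ^+ 2 / 2) dx (i%:Z)) =
    - dx * (((rho k (i%:Z) - rho k.-1 (i%:Z)) / dt) * (`|uhat (u k) (i%:Z)| ^+ 2 / 2))
    - (H i.+1 - H i).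
    move=> i /andP[_ hi].
    have hc := hcont k i hk hi.
    have -> : (rho k (i%:Z) - rho k.-1 (i%:Z)) / dt = - fdiff G dx i%:Z.
      by apply/eqP; rewrite -subr_eq0 opprK; apply/eqP; exact: hc.
    rewrite /H /fdiff intS'; field; exact: hdx.
  rewrite !mulr_sumr (eq_big_nat _ _ key) sumrB telescope_sumr //.
  have -> : H N - H 0 = 0 by rewrite /H /G /Up uN u0 p0 n0; ring.
  by rewrite subr0.
Qed.
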